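(* Let $C$ be a smooth affine rational curve over an algebraically closed field $k$ of characteristic zero. Then the bracket width of the simple Lie algebra $\mathrm{Vec}(C)$ is at most two.
   Context: $\mathrm{Vec}(C)=H^0(C,\mathcal{T}_C)$ is the Lie algebra of algebraic vector fields on $C$. The bracket width of a Lie algebra $L$ is the supremum over $a\in[L,L]$ of the smallest number $m$ such that $a$ is a sum of $m$ brackets of elements of $L$. *)

(* Defs.v *)
From HB Require Import structures.
From mathcomp Require Import all_boot all_order all_algebra.
From mathcomp Require Import fraction.
From Stdlib Require List.
Set Implicit Arguments. Unset Strict Implicit. Unset Printing Implicit Defensive.
Import Order.TTheory GRing.Theory Num.Theory.
Local Open Scope ring_scope.

(* The function field k(x) of the affine line, as the fraction field of k[x]. *)
Notation Kx k := {fraction {poly k}}.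

Definition tof (k : idomainType) (q : {poly k}) : Kx k := FracField.tofrac q.

Definition pC (k : idomainType) (s : seq k) : {poly k} :=
  \prod_(a <- s) ('X - a%:P).

(* Coordinate ring O(C) of C = A^1 \ s, i.e. k[x][1/p_s], as a subring of k(x):
   the elements f / p_s^m with f in k[x]. *)
Definition inOC (k : idomainType) (s : seq k) (u : Kx k) : Prop :=
  exists (f : {poly k}) (m : nat), u = tof f / (tof (pC s)) ^+ m.

(* A k-derivation of O(C), represented by a function on k(x) that maps O(C)
   into O(C); only its values on O(C) matter (see eqV below). *)
Definition is_derivation (k : idomainType) (s : seq k) (D : Kx k -> Kx k) : Prop :=
  [/\ forall u, inOC s u -> inOC s (D u),
      forall u v, inOC s u -> inOC s v -> D (u + v) = D u + D v,
      forall (c : k) u, inOC s u -> D (tof c%:P * u) = tof c%:P * D u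
    & forall u v, inOC s u -> inOC s v -> D (u * v) = u * D v + D u * v].

Definition eqV (k : idomainType) (s : seq k) (D E : Kx k -> Kx k) : Prop :=
  forall u, inOC s u -> D u = E u.

Definition lie (k : idomainType) (D E : Kx k -> Kx k) : Kx k -> Kx k :=
  fun u => D (E u) - E (D u).

Definition sum_brackets (k : idomainType) (l : seq ((Kx k -> Kx k) * (Kx k -> Kx k)))
  : Kx k -> Kx k :=
  fun u => \sum_(de <- l) lie de.1 de.2 u.

Definition in_derived (k : idomainType) (s : seq k) (D : Kx k -> Kx k) : Prop :=
  exists l : seq ((Kx k -> Kx k) * (Kx k -> Kx k)),
    (forall de, List.In de l -> is_derivation s de.1 /\ is_derivation s de.2) /\
    eqV s D (sum_brackets l).

Definition sum_of_brackets_le (k : idomainType) (s : seq k) (m : nat)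
  (D : Kx k -> Kx k) : Prop :=
  exists l : seq ((Kx k -> Kx k) * (Kx k -> Kx k)),
    (size l <= m)%N /\
    (forall de, List.In de l -> is_derivation s de.1 /\ is_derivation s de.2) /\
    eqV s D (sum_brackets l).

Definition bracket_width_le (k : idomainType) (s : seq k) (m : nat) : Prop :=
  forall D, is_derivation s D -> in_derived s D -> sum_of_brackets_le s m D.

(* Main.v *)
Require Import Defs.
From HB Require Import structures.
From mathcomp Require Import all_boot all_order all_algebra.
From mathcomp Require Import fraction.
From mathcomp Require Import ring.
From Stdlib Require Import ClassicalEpsilon.
Set Implicit Arguments. Unset Strict Implicit. Unset Printing Implicit Defensive.
Import Order.TTheory GRing.Theory Num.Theory.
Local Open Scope ring_scope.

Section Fld.
Variable K : fieldType.
Lemma addfrac (a b c d : K) : b != 0 -> d != 0 -> a/b + c/d = (a*d + c*b)/(b*d).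
Proof. by move=> hb hd; field; rewrite hb hd. Qed.
Lemma mulfrac (a b c d : K) : b != 0 -> d != 0 -> a/b * (c/d) = (a*c)/(b*d).
Proof. by move=> hb hd; field; rewrite hb hd. Qed.
Lemma dadd (a a' b b' c c' d d' : K) : b != 0 -> d != 0 ->
  ((a'*d + a*d' + (c'*b + c*b'))*(b*d) - (a*d+c*b)*(b'*d+b*d'))/((b*d)^+2)
  = (a'*b - a*b')/(b^+2) + (c'*d - c*d')/(d^+2).
Proof. by move=> hb hd; field; rewrite hb hd. Qed.
Lemma dmul (a a' b b' c c' d d' : K) : b != 0 -> d != 0 ->
  ((a'*c + a*c')*(b*d) - (a*c)*(b'*d+b*d'))/((b*d)^+2)
  = a/b * ((c'*d - c*d')/(d^+2)) + (a'*b - a*b')/(b^+2) * (c/d).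
Proof. by move=> hb hd; field; rewrite hb hd. Qed.
Lemma solve (Du F F' w W' X : K) : w != 0 ->
  Du * w = F' * X - F / w * (W' * X) -> Du = (F' * w - F * W') / w ^+ 2 * X.
Proof.
move=> hw h; have -> : Du = (Du*w)/w by field.
by rewrite h; field.
Qed.
Lemma hfid (F U w W' : K) : w != 0 ->
  F / w = 1 / w * ((F * w * w - U * W') / w ^+ 2) - U / w * ((0 * w - 1 * W') / w ^+ 2).
Proof. by move=> hw; field. Qed.
End Fld.

Lemma lieid (R : comRingType) (du ddu g h dg dh : R) :
  du * (g * dh - h * dg) = g * (h * ddu + dh * du) - h * (g * ddu + dg * du).
Proof. by ring. Qed.

Section Der.
Variable R : idomainType.
Local Notation F := {fraction {poly R}}.
Local Notation tf := (@FracField.tofrac {poly R}).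

Definition repb (u : F) := exists nd : {poly R} * {poly R}, nd.2 != 0 /\ u = tf nd.1 / tf nd.2.

Definition dF (u : F) : F :=
  match excluded_middle_informative (repb u) with
  | left H => let nd := proj1_sig (constructive_indefinite_description _ H) in
      tf (nd.1^`() * nd.2 - nd.1 * nd.2^`()) / tf (nd.2 ^+ 2)
  | right _ => 0 end.

Lemma tf_neq0 (d : {poly R}) : d != 0 -> tf d != 0.
Proof. by rewrite tofrac_eq0. Qed.

Lemma key (n1 d1 n2 d2 : {poly R}) : n1 * d2 = n2 * d1 ->
  (n1^`() * d1 - n1 * d1^`()) * d2 ^+ 2 = (n2^`() * d2 - n2 * d2^`()) * d1 ^+ 2.
Proof.
move=> E; have E' := congr1 (@deriv _) E; rewrite !derivM in E'.
apply/eqP; rewrite -subr_eq0; apply/eqP.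
have -> : (n1^`() * d1 - n1 * d1^`()) * d2 ^+ 2 - (n2^`() * d2 - n2 * d2^`()) * d1 ^+ 2
  = d1 * d2 * ((n1^`() * d2 + n1 * d2^`()) - (n2^`() * d1 + n2 * d1^`()))
    - (d1^`() * d2 + d1 * d2^`()) * (n1 * d2 - n2 * d1) by ring.
by rewrite E' E !subrr !mulr0 subrr.
Qed.

Lemma dF_E n d : d != 0 -> dF (tf n / tf d) = tf (n^`() * d - n * d^`()) / tf (d ^+ 2).
Proof.
move=> hd; rewrite /dF; case: excluded_middle_informative => [H|H]; last first.
  by exfalso; apply: H; exists (n, d).
case: constructive_indefinite_description => [[n2 d2]] /= [hd2 E].
have E2 : n * d2 = n2 * d.
  apply/eqP; rewrite -tofrac_eq !rmorphM /=; apply/eqP.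
  move/eqP: E; rewrite eq_sym eqr_div ?tf_neq0 //; by move/eqP.
apply/eqP; rewrite eqr_div ?tf_neq0 ?expf_neq0 //.
by rewrite -!rmorphM /= tofrac_eq (key E2).
Qed.

Lemma repbP n d : d != 0 -> repb (tf n / tf d).
Proof. by move=> hd; exists (n, d). Qed.

Lemma repb_tf n : repb (tf n).
Proof. by exists (n, 1); rewrite /= oner_neq0 rmorph1 divr1. Qed.

Lemma dF_repb u : repb u -> repb (dF u).
Proof. by case=> [[n d]] /= [hd ->]; rewrite dF_E //; apply: repbP; rewrite expf_neq0. Qed.

Lemma repbM u v : repb u -> repb v -> repb (u * v).
Proof.
case=> [[n1 d1]] /= [h1 ->]; case=> [[n2 d2]] /= [h2 ->].
rewrite mulfrac ?tf_neq0 // -!rmorphM; apply: repbP; by rewrite mulf_neq0.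
Qed.

Lemma dF_D u v : repb u -> repb v -> dF (u + v) = dF u + dF v.
Proof.
case=> [[a b]] /= [hb ->]; case=> [[c d]] /= [hd ->].
rewrite addfrac ?tf_neq0 // -!rmorphM -rmorphD !dF_E ?mulf_neq0 //.
rewrite !(derivD, derivM) !(rmorphD, rmorphB, rmorphN, rmorphM, rmorphXn).
by apply: dadd; rewrite tf_neq0.
Qed.

Lemma dF_M u v : repb u -> repb v -> dF (u * v) = u * dF v + dF u * v.
Proof.
case=> [[a b]] /= [hb ->]; case=> [[c d]] /= [hd ->].
rewrite mulfrac ?tf_neq0 // -!rmorphM !dF_E ?mulf_neq0 //.
rewrite !(derivD, derivM) !(rmorphD, rmorphB, rmorphN, rmorphM, rmorphXn).
by apply: dmul; rewrite tf_neq0.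
Qed.

Lemma dF_C c : dF (tf c%:P) = 0.
Proof.
have -> : tf c%:P = tf c%:P / tf 1 by rewrite rmorph1 divr1.
rewrite dF_E ?oner_neq0 // -polyC1 !derivC !mul0r mulr0 subrr rmorph0 mul0r //.
Qed.
End Der.

Lemma antideriv (k : fieldType) (hk : [pchar k] =i pred0) (q : {poly k}) :
  exists U : {poly k}, U^`() = q.
Proof.
exists (\poly_(i < (size q).+1) (q`_i.-1 / i%:R)).
apply/polyP => i; rewrite coef_deriv coef_poly /=.
case: ltnP => hi.
  rewrite -(mulr_natr (q`_i / _)) divfK //.
  by move/pcharf0P: hk => ->.
by rewrite mul0rn nth_default.
Qed.

Section OC.
Variable k : idomainType.
Variable s : seq k.
Local Notation tf := (@FracField.tofrac {poly k}).
Local Notation P := (pC s).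

Lemma pC_neq0 : P != 0.
Proof. apply: monic_neq0; exact: monic_prod_XsubC. Qed.

Lemma inOC_repb u : inOC s u -> repb u.
Proof.
case=> f [m ->]; rewrite /tof -rmorphXn; apply: repbP.
by rewrite expf_neq0 // pC_neq0.
Qed.

Lemma inOC_tf f : inOC s (tf f).
Proof. by exists f, 0%N; rewrite expr0 divr1. Qed.

Lemma inOC_M u v : inOC s u -> inOC s v -> inOC s (u * v).
Proof.
case=> f1 [m1 ->]; case=> f2 [m2 ->]; exists (f1 * f2), (m1 + m2)%N.
rewrite /tof mulfrac ?expf_neq0 ?tf_neq0 ?pC_neq0 // rmorphM exprD //.
Qed.

Lemma inOC_dF u : inOC s u -> inOC s (dF u).
Proof.
case=> f [m ->]; rewrite /tof -rmorphXn dF_E ?expf_neq0 ?pC_neq0 //.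
by exists (f^`() * P ^+ m - f * (P ^+ m)^`()), (m * 2)%N; rewrite /tof -!rmorphXn exprM.
Qed.

Lemma isder_G a : inOC s a -> is_derivation s (fun u => a * dF u).
Proof.
move=> ha; split.
- by move=> u hu; apply: inOC_M => //; apply: inOC_dF.
- by move=> u v hu hv /=; rewrite (dF_D (inOC_repb hu) (inOC_repb hv)) mulrDr.
- move=> c u hu /=; rewrite /tof (dF_M (repb_tf _) (inOC_repb hu)) dF_C mul0r addr0.
  by rewrite mulrCA.
- move=> u v hu hv /=; rewrite (dF_M (inOC_repb hu) (inOC_repb hv)) mulrDr mulrCA mulrA. by rewrite [a * (dF u * v)]mulrA.

Qed.

Section DD.
Variable D : {fraction {poly k}} -> {fraction {poly k}}.
Hypothesis HD : is_derivation s D.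

Lemma D_sum u v : inOC s u -> inOC s v -> D (u + v) = D u + D v.
Proof. by case: HD => _ H _ _; apply: H. Qed.
Lemma D_mul u v : inOC s u -> inOC s v -> D (u * v) = u * D v + D u * v.
Proof. by case: HD => _ _ _ H; apply: H. Qed.
Lemma D_scal (c : k) u : inOC s u -> D (tf c%:P * u) = tf c%:P * D u.
Proof. by case: HD => _ _ H _; apply: H. Qed.

Lemma D0 : D 0 = 0.
Proof.
have h0 : inOC s 0 by rewrite -(rmorph0 tf); apply: inOC_tf.
have h := D_sum h0 h0; rewrite addr0 in h.
have : D 0 + D 0 - D 0 = D 0 - D 0 by rewrite -h.
by rewrite addrK subrr.
Qed.

Lemma D1 : D 1 = 0.
Proof.
have h1 : inOC s 1 by rewrite -(rmorph1 tf); apply: inOC_tf.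
have h := D_mul h1 h1; rewrite !mulr1 !mul1r in h.
have : D 1 + D 1 - D 1 = D 1 - D 1 by rewrite -h.
by rewrite addrK subrr.
Qed.

Lemma DC c : D (tf c%:P) = 0.
Proof.
have h1 : inOC s 1 by rewrite -(rmorph1 tf); apply: inOC_tf.
by rewrite -[tf c%:P]mulr1 D_scal // D1 mulr0.
Qed.

Lemma Dpoly q : D (tf q) = tf q^`() * D (tf 'X).
Proof.
elim/poly_ind: q => [|Q c IH]; first by rewrite rmorph0 D0 deriv0 rmorph0 mul0r.
rewrite rmorphD rmorphM /= D_sum; last 2 first.
- by rewrite -rmorphM; apply: inOC_tf.
- exact: inOC_tf.
rewrite (D_mul (inOC_tf Q) (inOC_tf 'X)) (DC c) addr0 IH derivMXaddC rmorphD rmorphM /=.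
by rewrite mulrDl mulrAC.
Qed.

Lemma Dgen_aux (f W : {poly k}) : W != 0 -> inOC s (tf f / tf W) ->
  D (tf f / tf W) = dF (tf f / tf W) * D (tf 'X).
Proof.
move=> hW hu.
have hw : tf W != 0 by rewrite tf_neq0.
have E : D (tf f) = D (tf f / tf W * tf W) by rewrite divfK.
rewrite (D_mul hu (inOC_tf W)) in E.
rewrite (Dpoly f) (Dpoly W) in E.
rewrite dF_E // !(rmorphB, rmorphM, rmorphXn) /=.
apply: solve => //.
by rewrite E addrC addKr.
Qed.

Lemma Dgen u : inOC s u -> D u = dF u * D (tf 'X).
Proof.
move=> hu; case: (hu) => f [m E]; move: hu; rewrite E /tof -rmorphXn.
by apply: Dgen_aux; rewrite expf_neq0 // pC_neq0.
Qed.
End DD.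
End OC.

Theorem proposition3p1 (k : closedFieldType) (hk : [pchar k] =i pred0)
  (s : seq k) : bracket_width_le s 2.
Proof.
move=> D HD _.
have hx : inOC s (tof 'X) by apply: inOC_tf.
have [F [m Hf]] : inOC s (D (tof 'X)) by case: HD => H _ _ _; apply: H.
have [U hU] := antideriv hk (F * (pC s) ^+ m).
set W := pC s ^+ m.
have hW : W != 0 by rewrite expf_neq0 // pC_neq0.
set g : {fraction {poly k}} := tof 1 / tof W.
set h : {fraction {poly k}} := tof U / tof W.
have hg : inOC s g by exists 1, m; rewrite /g /W /tof rmorphXn.
have hh : inOC s h by exists U, m; rewrite /h /W /tof rmorphXn.
exists [:: ((fun u => g * dF u), (fun u => h * dF u))].
split => //; split.
  move=> de /= [<-|[]] /=; split; exact: isder_G.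
move=> u hu; rewrite /sum_brackets big_seq1 /lie /=.
have rg := inOC_repb hg; have rh := inOC_repb hh.
have rdu := inOC_repb (inOC_dF hu).
rewrite (Dgen HD hu) (dF_M rh rdu) (dF_M rg rdu).
have Hf' : D (tof 'X) = g * dF h - h * dF g.
  rewrite Hf /g /h /tof -rmorphXn -/W !dF_E //.
  have d1 : (1 : {poly k})^`() = 0 by rewrite -polyC1 derivC.
  rewrite d1 hU !(rmorphB, rmorphM, rmorphXn, rmorph0, rmorph1).
  by apply: hfid; rewrite expf_neq0 // (tf_neq0 (pC_neq0 s)).
by rewrite Hf'; apply: lieid.
Qed.
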